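(* Let $k\ge 3$ and let $c_1\ge c_2\ge\dots\ge c_k>0$ be constants with $\sum_{i=1}^k c_i=1$. For every $n$ such that all $c_i n$ are integers, let $G_n$ be the complete $k$-partite graph with parts $V_1,\dots,V_k$, $|V_i|=c_i n$. Then: (i) if $c_2\le \tfrac12(1-c_1)$, $\mathrm{RC}(G_n)=n+c_1n-1$; (ii) if $c_2> \tfrac12(1-c_1)$, $\mathrm{RC}(G_n)=2(n-c_2n)$.
   Context: Robot crawler model: let $G=(V,E)$ be a finite connected simple graph with $|V|=n$. An initial weighting is a bijection $w_0:V\to\{-n,-n+1,\dots,-1\}$. At time $1$ the crawler visits $w_0^{-1}(-n)$. If the crawler visits vertex $v$ at time $t$, then $w_t(v)=t$ and $w_t(u)=w_{t-1}(u)$ for all $u\neq v$. If $\min_{y\in V}w_t(y)>0$, the process stops and $\mathcal{RC}(G,w_0):=t$. Otherwise, at time $t+1$ the crawler moves to the neighbour $u$ of $v$ minimising $w_t(u)$ (the weights are distinct, so this is well defined). A vertex is ''cleaned'' at the first time it is visited. With $\Omega_n$ the set of all $n!$ initial weightings, $\mathrm{rc}(G)=\min_{w_0\in\Omega_n}\mathcal{RC}(G,w_0)$, $\mathrm{RC}(G)=\max_{w_0\in\Omega_n}\mathcal{RC}(G,w_0)$, and $\overline{\mathrm{rc}}(G)=\mathbb{E}\,\mathcal{RC}(G,\overline{w_0})$ where $\overline{w_0}$ is uniformly distributed on $\Omega_n$. A complete $k$-partite graph with parts $V_1,\dots,V_k$ has an edge between $u$ and $v$ if and only if $u,v$ lie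 in different parts. *)

(* Defs.v *)
From HB Require Import structures.
From mathcomp Require Import all_boot all_order all_algebra.
Set Implicit Arguments. Unset Strict Implicit. Unset Printing Implicit Defensive.
Import Order.TTheory GRing.Theory Num.Theory.
Local Open Scope ring_scope.

Section Crawler.
Variables (T : finType) (e : rel T).

(* An initial weighting: a bijection T -> {-n,...,-1}, n = #|T|
   (injective into a set of size n, hence bijective). *)
Definition is_weighting (w0 : T -> int) : Prop :=
  injective w0 /\ forall v, - (#|T|%:Z) <= w0 v <= -1.

(* The element of P minimising w (unique when w is injective). *)
Definition argmin_on (P : pred T) (w : T -> int) : option T :=
  [pick u | P u && [forall y, P y ==> (w u <= w y)]].

(* crawl w0 t = (w_t, vertex visited at time t); time 0 = before start. *)
Fixpoint crawl (w0 : T -> int) (t : nat) : (T -> int) * option T :=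
  match t with
  | 0%N => (w0, None)
  | t'.+1 =>
      let (w, p) := crawl w0 t' in
      let next := match p with
                  | None => argmin_on predT w          (* time 1: vertex of weight -n *)
                  | Some x => argmin_on (e x) w
                  end in
      match next with
      | Some v => (fun y => if y == v then (t'.+1)%:Z else w y, Some v)
      | None => (w, p)
      end
  end.

Definition all_clean (w0 : T -> int) (t : nat) : bool :=
  [forall y, 0 < (crawl w0 t).1 y].

Definition RC_run (w0 : T -> int) (t : nat) : Prop :=
  all_clean w0 t /\ forall s, (s < t)%N -> ~~ all_clean w0 s.

(* RC(G) = m : m is the maximum of RC(G,w0) over all initial weightings
   (in particular the process stops for every weighting). *)
Definition RC_is (m : nat) : Prop :=
  (forall w0, is_weighting w0 -> exists2 t, RC_run w0 t & (t <= m)%N) /\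
  (exists2 w0, is_weighting w0 & RC_run w0 m).

End Crawler.

Definition multipartite_rel (T : finType) (part : T -> nat) : rel T :=
  fun u v => part u != part v.

(* Main.v *)
Require Import Defs.
From HB Require Import structures.
From mathcomp Require Import all_boot all_order all_algebra.
From mathcomp Require Import zify ring lra.
Import Order.TTheory GRing.Theory Num.Theory.
Set Implicit Arguments. Unset Strict Implicit.

Section Arr.
Variables (T : finType) (part : T -> nat).
Definition cnt l (s : seq T) := count (fun v => part v == l) s.
Definition drel := fun u v : T => part u != part v.

Lemma cnt_cons l x s : cnt l (x :: s) = ((part x == l) + cnt l s)%N.
Proof. by []. Qed.

Lemma cnt_disj l q s : l != q -> (cnt l s + cnt q s <= size s)%N.
Proof.
move=> lq; elim: s => //= x s IH; rewrite -/(cnt l s) -/(cnt q s).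
case: (eqVneq (part x) l) => [pl|pl] /=.
  have : (part x == q) = false by rewrite pl; exact: negbTE.
  move=> ->; lia.
case: (part x == q); lia.
Qed.

Lemma arrange N : forall (s : seq T) f, size s = N ->
  (forall l, 2 * cnt l s <= N.+1) -> 2 * cnt f s <= N ->
  exists r, [/\ perm_eq r s, sorted drel r &
    (if r is x :: _ then part x != f else True)].
Proof.
elim: N => [|N IH] s f hs h1 h2.
  by exists [::]; case: s hs h1 h2 => // _ _ _; split.
have [x0 x0s px0] : exists2 x0, x0 \in s & part x0 != f.
  apply/hasP; rewrite has_count lt0n; apply/negP => /eqP h0.
  have hc : (cnt f s + count (fun v => part v != f) s = size s)%N :=
    count_predC (fun v => part v == f) s.
  rewrite hs h0 addn0 in hc; lia.
pose P := fun x => (x \in s) && (part x != f).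
have Px0 : P x0 by rewrite /P x0s px0.
case: (@arg_maxnP T x0 P (fun x => cnt (part x) s) Px0) => x /andP[xs pxf] Hmax.
set s' := rem x s.
have ps : perm_eq s (x :: s') by exact: perm_to_rem.
have cs : forall l, cnt l s = ((part x == l) + cnt l s')%N.
  by move=> l; rewrite /cnt (permP ps).
have hs' : size s' = N by rewrite size_rem // hs.
have [r [pr sr hr]] : exists r, [/\ perm_eq r s', sorted drel r &
    (if r is y :: _ then part y != part x else True)].
  apply: IH => //.
    move=> l; case: (eqVneq l (part x)) => [->|lq].
      have := h1 (part x); rewrite cs eqxx; lia.
    have E : cnt l s' = cnt l s.
      by rewrite cs; have -> : (part x == l) = false by apply/negbTE; rewrite eq_sym.
    rewrite E.
    case: (eqVneq l f) => [->|lf]; first by move: h2; lia.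
    case: (posnP (cnt l s)) => [->//|cpos].
    have [y ys /eqP py] : exists2 y, y \in s & part y == l.
      by apply/hasP; rewrite has_count.
    have Py : P y by rewrite /P ys py lf.
    have := Hmax y Py; rewrite py => hle.
    have := cnt_disj s lq; rewrite hs; lia.
  have := h1 (part x); rewrite cs eqxx; lia.
exists (x :: r); split => //.
- by rewrite perm_sym (perm_trans ps) // perm_cons perm_sym.
- by case: r sr hr {pr} => //= y r -> hr; rewrite andbT /drel eq_sym.
Qed.
End Arr.

Local Open Scope ring_scope.

Lemma argmin_spec (T : finType) (P : pred T) (w : T -> int) u :
  argmin_on P w = Some u -> P u /\ forall y, P y -> w u <= w y.
Proof.
rewrite /argmin_on; case: pickP => // u' /andP[Pu /forallP H] [<-].
by split => // y Py; exact: (implyP (H y) Py).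
Qed.

Lemma argmin_ex (T : finType) (P : pred T) (w : T -> int) y :
  P y -> exists u, argmin_on P w = Some u.
Proof.
move=> Py; rewrite /argmin_on; case: pickP => [u _|H]; first by exists u.
exfalso; case: (@Order.TotalTheory.arg_minP _ _ _ y P w Py) => u Pu Hu.
move: (H u); rewrite Pu /=; move/negP; apply; apply/forallP => z.
by apply/implyP => Pz; exact: Hu.
Qed.

Section Gen.
Variables (T : finType) (e : rel T) (w0 : T -> int).
Hypothesis hnb : forall x, exists y, e x y.
Hypothesis hT : (0 < #|T|)%N.
Hypothesis hw0 : forall y, w0 y < 0.

Local Notation W t := (crawl e w0 t).1.
Local Notation X t := (crawl e w0 t).2.

Definition stepP (t : nat) (v : T) : Prop :=
  match X t with
  | None => forall y, W t v <= W t y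
  | Some x => e x v /\ forall y, e x y -> W t v <= W t y
  end.

Lemma crawl_step t : exists v,
  crawl e w0 t.+1 = (fun y => if y == v then (t.+1)%:Z else W t y, Some v)
  /\ stepP t v.
Proof.
rewrite /stepP /=; case E: (crawl e w0 t) => [w p] /=.
case: p E => [x|] E.
  have [y exy] := hnb x; have [v Hv] := @argmin_ex _ _ w _ exy; rewrite Hv.
  by exists v; split => //; exact: (@argmin_spec _ _ _ _ Hv).
have /card_gt0P [y _] := hT.
have [v Hv] := @argmin_ex _ predT w y (erefl true); rewrite Hv.
exists v; split => //; have [_ H] := @argmin_spec _ _ _ _ Hv; move=> z; exact: H.
Qed.

Lemma inv t y : W t y = w0 y \/ 0 < W t y.
Proof.
elim: t y => [|t IH] y; first by left.
have [v [-> _]] := crawl_step t; rewrite /=.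
by case: eqP => _; [right | exact: IH].
Qed.

Definition D t : {set T} := [set y | W t y < 0].

Lemma clean_iff t : all_clean e w0 t = (D t == set0).
Proof.
apply/forallP/eqP => [H|H].
  apply/setP => y; rewrite !inE; apply/negbTE; rewrite -leNgt; exact: ltW (H y).
move=> y; have := inv t y; case => [E|//].
have : y \notin D t by rewrite H inE.
by rewrite inE E hw0.
Qed.

Lemma D_step t v : X t.+1 = Some v ->
  W t.+1 = (fun y => if y == v then (t.+1)%:Z else W t y) /\ D t.+1 = D t :\ v /\ stepP t v.
Proof.
have [v' [E H]] := crawl_step t; rewrite E /= => -[<-]; do 2?split => //.
by apply/setP => y; rewrite /D E !inE /=; case: eqP.
Qed.

Lemma X_some t : exists v, X t.+1 = Some v.
Proof. by have [v [-> _]] := crawl_step t; exists v. Qed.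

End Gen.


Section Multi.
Variables (T : finType) (part : T -> nat) (w0 : T -> int).
Local Notation e := (multipartite_rel part).
Hypothesis hnb : forall x, exists y, e x y.
Hypothesis hT : (0 < #|T|)%N.
Hypothesis hw0 : forall y, w0 y < 0.

Local Notation W t := (crawl e w0 t).1.
Local Notation X t := (crawl e w0 t).2.
Local Notation D := (D e w0).

Lemma dirty_next t x y v : X t = Some x -> stepP e w0 t v -> e x y -> y \in D t -> v \in D t /\ e x v.
Proof.
move=> Hx; rewrite /stepP Hx => -[exv H] exy; rewrite !inE => Hy; split => //.
exact: le_lt_trans (H _ exy) Hy.
Qed.

Lemma finish d : forall t x p, X t = Some x -> part x != p ->
  (forall y, y \in D t -> part y = p) -> #|D t| = d ->
  (forall j, (j < (2*d).-1)%N -> D (t + j) != set0) /\ D (t + (2*d).-1) = set0.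
Proof.
elim: d => [|d IH] t x p Hx Hp HD Hc.
  by split => // ; rewrite addn0; apply/eqP; rewrite -cards_eq0 Hc.
have /card_gt0P [y yD] : (0 < #|D t|)%N by rewrite Hc.
have exy : e x y by rewrite /multipartite_rel (HD _ yD).
have [v Hv] := X_some w0 hnb hT t.
have [_ [HD1 Hs]] := D_step hnb hT Hv.
have [vD exv] := dirty_next Hx Hs exy yD.
have pv : part v = p by exact: HD.
have Hc1 : #|D t.+1| = d by move: Hc; rewrite (cardsD1 v) vD -HD1 add1n => -[].
have tD : D t != set0 by apply/set0Pn; exists y.
clear Hc; case: d IH Hc1 => [|d] IH Hc1.
  split; first by case=> // _; rewrite addn0.
  by rewrite addn1; apply/eqP; rewrite -cards_eq0 Hc1.
have [v' Hv'] := X_some w0 hnb hT t.+1.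
have [_ [HD2 Hs']] := D_step hnb hT Hv'.
have exv' : e v v'.
  by move: Hs'; rewrite /stepP Hv => -[].
have pv' : part v' != p by rewrite -pv eq_sym.
have HD2' : D t.+2 = D t.+1.
  have nv' : v' \notin D t.+1.
    apply/negP; rewrite HD1 in_setD1 => /andP[_ /HD] h; by rewrite h eqxx in pv'.
  rewrite HD2; apply/setP => z; rewrite in_setD1; case: eqP => // ->.
  by rewrite (negbTE nv').
have HDs : forall z, z \in D t.+2 -> part z = p.
  by move=> z; rewrite HD2' HD1 in_setD1 => /andP[_ /HD].
have [IH1 IH2] := IH t.+2 v' p Hv' pv' HDs (etrans (congr1 (fun A : {set T} => #|A|) HD2') Hc1).
split.
  move=> j hj; case: j hj => [|[|j]] hj; first by rewrite addn0.
    by rewrite addn1; rewrite -cards_eq0 Hc1.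
  have := IH1 j ltac:(lia); by rewrite -!addSnnS.
by have -> : (t + (2 * d.+2).-1 = t.+2 + (2 * d.+1).-1)%N by lia.
Qed.

End Multi.


Section Multi2.
Variables (T : finType) (part : T -> nat) (w0 : T -> int).
Local Notation e := (multipartite_rel part).
Hypothesis hnb : forall x, exists y, e x y.
Hypothesis hT : (0 < #|T|)%N.
Hypothesis hw0 : forall y, w0 y < 0.

Local Notation W t := (crawl e w0 t).1.
Local Notation X t := (crawl e w0 t).2.
Local Notation D := (D e w0).
Local Notation n := #|T|.

Definition Cq q t : {set T} := [set y | (part y == q) && (0 < W t y)].

Definition atq q t : bool := if X t is Some x then part x == q else false.

Lemma count_inv q t : (2 * #|Cq q t| <= t + atq q t)%N.
Proof.
elim: t => [|t IH].
  rewrite /atq /=; have -> : Cq q 0 = set0.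
    by apply/setP => y; rewrite !inE /= ltNge (ltW (hw0 y)) andbF.
  by rewrite cards0.
have [v Hv] := X_some w0 hnb hT t.
have [HW [_ Hs]] := D_step hnb hT Hv.
rewrite /atq Hv.
have Hprev : part v == q -> atq q t = false.
  move=> /eqP pv; rewrite /atq; move: Hs; rewrite /stepP.
  case: (X t) => // x [exv _]; apply/negbTE; by rewrite -pv.
case: (boolP (part v == q)) => pv.
  have sub : Cq q t.+1 \subset v |: Cq q t.
    apply/subsetP => y; by rewrite !inE HW /=; case: (y =P v).
  have := subset_leq_card sub; rewrite cardsU1 => h.
  move: IH; rewrite (Hprev pv) addn0 => IH.
  have : (#|Cq q t.+1| <= 1 + #|Cq q t|)%N.
    by apply: leq_trans h _; rewrite leq_add2r leq_b1.
  lia.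
have sub : Cq q t.+1 \subset Cq q t.
  apply/subsetP => y; rewrite !inE HW /=; case: (y =P v) => [->|//].
  by rewrite (negbTE pv).
have := subset_leq_card sub; move: IH; case: (atq q t) => /=; lia.
Qed.

Lemma phaseB m : forall t x, #|D t| = m -> X t = Some x -> (t + #|D t| = n)%N ->
  (exists2 y, y \in D t & part y != part x) \/ D t = set0 ->
  exists t0 x0 p, [/\ X t0 = Some x0, (t0 + #|D t0| = n)%N, part x0 != p &
     forall y, y \in D t0 -> part y = p].
Proof.
elim: m => [|m IH] t x Hm Hx Ht Hy.
  exists t, x, (part x).+1; split => //; first by rewrite neq_ltn ltnSn.
  by move=> y; move/eqP: Hm; rewrite cards_eq0 => /eqP ->; rewrite inE.
case: Hy => [[y yD pyx]|H0]; last first.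
  exists t, x, (part x).+1; split => //; first by rewrite neq_ltn ltnSn.
  by move=> y; rewrite H0 inE.
case: (boolP [forall z, (z \in D t) ==> (part z == part y)]) => Hall.
  exists t, x, (part y); split => //; first by rewrite eq_sym.
  by move=> z zD; apply/eqP; exact: (implyP (forallP Hall z) zD).
move: Hall; rewrite negb_forall => /existsP [z]; rewrite negb_imply => /andP[zD pzy].
have [v Hv] := X_some w0 hnb hT t.
have [_ [HD1 Hs]] := D_step hnb hT Hv.
have exy : e x y by rewrite /multipartite_rel eq_sym.
have [vD exv] := dirty_next Hx Hs exy yD.
have Hc1 : #|D t.+1| = m by move: Hm; rewrite (cardsD1 v) vD -HD1 add1n => -[].
apply: (IH t.+1 v Hc1 Hv); first by move: Ht; rewrite Hc1 Hm; lia.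
left; case: (boolP (part y == part v)) => pyv.
  exists z; last by rewrite (eqP pyv) in pzy.
  rewrite HD1 in_setD1 zD andbT; apply/negP => /eqP zv.
  by rewrite zv eq_sym pyv in pzy.
exists y => //; rewrite HD1 in_setD1 yD andbT; apply/negP => /eqP yv.
by rewrite yv eqxx in pyv.
Qed.

End Multi2.


Section Upper.
Variables (T : finType) (part : T -> nat) (w0 : T -> int).
Local Notation e := (multipartite_rel part).
Hypothesis hnb : forall x, exists y, e x y.
Hypothesis hT : (0 < #|T|)%N.
Hypothesis hw0 : forall y, w0 y < 0.

Local Notation W t := (crawl e w0 t).1.
Local Notation X t := (crawl e w0 t).2.
Local Notation D := (D e w0).
Local Notation n := #|T|.
Local Notation a q := #|[set v : T | part v == q]|.

Lemma notD_clean t y : y \notin D t -> 0 < W t y.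
Proof.
rewrite inE; case: (inv w0 hnb hT t y) => [->|//]; by rewrite hw0.
Qed.

Lemma class_sub_C q t : (forall y, part y == q -> y \notin D t) ->
  [set v : T | part v == q] \subset Cq part w0 q t.
Proof.
move=> H; apply/subsetP => y; rewrite !inE => pq; rewrite pq /=.
exact: notD_clean (H _ pq).
Qed.

Lemma upper : exists s p, [/\ all_clean e w0 s, (0 < a p)%N, (s + 1 <= n + a p)%N &
  forall q, q != p -> (2 * a q + s <= 2 * n)%N].
Proof.
have [v1 Hv1] := X_some w0 hnb hT 0.
have [_ [HD1 _]] := D_step hnb hT Hv1.
have D0 : D 0 = setT by apply/setP => y; rewrite !inE /= hw0.
have c1 : (1 + #|D 1| = n)%N.
  by rewrite HD1 D0; have := cardsD1 v1 [set: T]; rewrite in_setT cardsT.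
have [y ey] := hnb v1.
have ey' : part y != part v1 by rewrite eq_sym.
have yD1 : y \in D 1.
  rewrite HD1 D0 in_setD1 in_setT andbT; apply/negP => /eqP yv; by rewrite yv /multipartite_rel eqxx in ey.
have [t0 [x0 [p [Hx0 Ht0 Hp HD]]]] :=
  phaseB hnb hT (erefl _) Hv1 c1 (or_introl (ex_intro2 _ _ y yD1 ey')).
have atq1 : forall q, (atq part w0 q t0 <= 1)%N by move=> q; exact: leq_b1.
have Dsub : D t0 \subset [set v : T | part v == p].
  by apply/subsetP => z /HD; rewrite inE => ->.
have cov : forall q, q != p -> forall y, part y == q -> y \notin D t0.
  move=> q qp z /eqP py; apply/negP => /HD; rewrite py => E; by rewrite E eqxx in qp.
case: (posnP #|D t0|) => [d0|dpos].
  have Dt0 : D t0 = set0 by apply/eqP; rewrite -cards_eq0 d0.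
  exists t0, (part x0); split.
  - by rewrite (clean_iff hnb hT hw0) Dt0.
  - by apply/card_gt0P; exists x0; rewrite inE.
  - rewrite d0 addn0 in Ht0; rewrite Ht0 leq_add2l.
    by apply/card_gt0P; exists x0; rewrite inE.
  - move=> q qx.
    have sub := @class_sub_C q t0 (fun y _ => ltac:(by rewrite Dt0 inE)).
    have := count_inv hnb hT hw0 q t0; rewrite /atq Hx0 eq_sym (negbTE qx).
    have := subset_leq_card sub; move: Ht0; rewrite d0; lia.
have [_ Hfin] := finish hnb hT Hx0 Hp HD (erefl _).
have dle := subset_leq_card Dsub.
exists (t0 + (2 * #|D t0|).-1), p; split.
- by rewrite (clean_iff hnb hT hw0) Hfin.
- exact: leq_trans dpos dle.
- move: Ht0 dle dpos; lia.
- move=> q qp.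
  have sub := class_sub_C (cov q qp).
  have := count_inv hnb hT hw0 q t0; have := atq1 q.
  have := subset_leq_card sub; move: Ht0 dpos; lia.
Qed.
End Upper.


Section Constr.
Variables (T : finType) (part : T -> nat) (full : seq T) (x0 : T) (t0 p : nat).
Local Notation e := (multipartite_rel part).
Local Notation n := #|T|.
Hypothesis hnb : forall x, exists y, e x y.
Hypothesis hperm : perm_eq full (enum T).
Hypothesis ht0 : (0 < t0 < n)%N.
Hypothesis halt : forall i, (i.+1 < t0)%N -> part (nth x0 full i) != part (nth x0 full i.+1).
Hypothesis htail : forall i, (t0 <= i < n)%N -> part (nth x0 full i) = p.
Hypothesis hlast : part (nth x0 full t0.-1) != p.

Definition w0c (v : T) : int := (index v full)%:Z - n%:Z.

Local Notation W t := (crawl e w0c t).1.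
Local Notation X t := (crawl e w0c t).2.
Local Notation D := (D e w0c).

Lemma hT : (0 < n)%N. Proof. by case/andP: ht0 => _ h; exact: leq_ltn_trans (leq0n t0) h. Qed.
Lemma size_full : size full = n. Proof. by rewrite (perm_size hperm) cardE. Qed.
Lemma mem_full y : y \in full. Proof. by rewrite (perm_mem hperm) mem_enum. Qed.
Lemma uniq_full : uniq full. Proof. by rewrite (perm_uniq hperm) enum_uniq. Qed.
Lemma index_lt y : (index y full < n)%N. Proof. by rewrite -size_full index_mem mem_full. Qed.
Lemma index_nth i : (i < n)%N -> index (nth x0 full i) full = i.
Proof. by move=> hi; rewrite index_uniq // ?size_full // uniq_full. Qed.

Lemma hw0c y : w0c y < 0.
Proof. rewrite /w0c subr_lt0 ltz_nat; exact: index_lt. Qed.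

Lemma w0c_inj : injective w0c.
Proof.
move=> y z; rewrite /w0c => /addIr /eqP; rewrite eqz_nat => /eqP h.
move: h; apply: index_inj; [exact: y | exact: mem_full | exact: mem_full].
Qed.

Lemma weighting : is_weighting w0c.
Proof.
split; first exact: w0c_inj.
move=> v; rewrite /w0c; have := index_lt v; set i := index v full => hi.
have h0 : (0:int) <= i%:Z by [].
have h1 : (i%:Z + 1 <= n%:Z) by rewrite -[1]/(1%N:int) -PoszD lez_nat addn1.
apply/andP; split; lra.
Qed.

Lemma dirty_w t y : y \in D t -> W t y = w0c y.
Proof.
rewrite inE; case: (inv w0c hnb hT t y) => // h1 h2.
by move: (lt_trans h1 h2); rewrite ltxx.
Qed.

Lemma phase1 t : (t < t0)%N ->
  X t.+1 = Some (nth x0 full t) /\ D t.+1 = [set y | (t < index y full)%N]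
  /\ #|D t.+1| = (n - t.+1)%N.
Proof.
have tn : (t0 < n)%N by case/andP: ht0.
have nthE : forall v i, (i < n)%N -> index v full = i -> v = nth x0 full i.
  by move=> v i _ <-; rewrite nth_index // mem_full.
elim: t => [|t IH] ht.
  have [v Hv] := X_some w0c hnb hT 0.
  have [HW [HD1 Hs]] := D_step hnb hT Hv.
  have i0 : index (nth x0 full 0) full = 0%N by rewrite index_nth //; exact: hT.
  have Hv0 : index v full = 0%N.
    have := Hs (nth x0 full 0); rewrite /= /w0c i0 lerD2r lez_nat leqn0 => /eqP //.
  have vE := nthE v 0%N hT Hv0.
  have D0 : D 0 = setT by apply/setP => y; rewrite !inE /= hw0c.
  split; first by rewrite Hv vE.
  split.
    rewrite HD1 D0; apply/setP => y; rewrite in_setD1 in_setT andbT inE lt0n.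
    apply/idP/idP => [/eqP yv|/eqP iy]; first by apply/eqP => iy; apply: yv; rewrite vE (nthE y 0%N hT iy).
    by apply/eqP => yv; apply: iy; rewrite yv.
  rewrite HD1 D0; have := cardsD1 v [set: T]; rewrite in_setT cardsT; lia.
have [Hx [HD1 Hc1]] := IH (ltnW ht).
have [v Hv] := X_some w0c hnb hT t.+1.
have [HW [HD2 Hs]] := D_step hnb hT Hv.
set ys := nth x0 full t.+1.
have iys : index ys full = t.+1 by rewrite index_nth //; lia.
have exy : e (nth x0 full t) ys by rewrite /multipartite_rel; exact: halt.
have ysD : ys \in D t.+1 by rewrite HD1 inE iys.
have [vD _] := dirty_next Hx Hs exy ysD.
have : W t.+1 v <= W t.+1 ys by move: Hs; rewrite /stepP Hx => -[_ H]; exact: H.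
rewrite (dirty_w vD) (dirty_w ysD) /w0c lerD2r lez_nat iys => hle.
have hgt : (t < index v full)%N by move: vD; rewrite HD1 inE.
have iv : index v full = t.+1 by apply/eqP; rewrite eqn_leq hle hgt.
have vE : v = ys by rewrite (nthE v t.+1) //; lia.
split; first by rewrite Hv vE.
split.
  rewrite HD2 HD1; apply/setP => y; rewrite in_setD1 !inE.
  apply/idP/idP => [/andP[yv ty]|ty].
    rewrite ltn_neqAle ty andbT; apply/negP => /eqP ity.
    by move: yv; rewrite vE (nthE y t.+1) ?eqxx //; lia.
  rewrite (ltnW ty) andbT; apply/negP => /eqP yv; by rewrite yv iv ltnn in ty.
rewrite HD2; have := cardsD1 v (D t.+1); rewrite vD Hc1; lia.
Qed.

Lemma constr_run : RC_run e w0c (t0 + (2 * (n - t0)).-1).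
Proof.
have tn : (t0 < n)%N by case/andP: ht0.
have t0p : (0 < t0)%N by case/andP: ht0.
have e1 : t0.-1.+1 = t0 by lia.
have [Hx [HD Hc]] := phase1 (t := t0.-1) ltac:(lia).
rewrite e1 in Hx HD Hc.
have HDp : forall y, y \in D t0 -> part y = p.
  move=> y; rewrite HD inE => hy; rewrite -(nth_index x0 (mem_full y)); apply: htail.
  by rewrite index_lt andbT; lia.
have [F1 F2] := finish hnb hT Hx hlast HDp Hc.
split; first by rewrite (clean_iff hnb hT hw0c) F2.
move=> s hs; rewrite (clean_iff hnb hT hw0c).
case: (leqP t0 s) => hst.
  have := F1 (s - t0)%N ltac:(lia); by rewrite subnKC.
case: s hs hst => [|s] hs hst.
  apply/set0Pn; exists x0; by rewrite inE /= hw0c.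
have [_ [HDs _]] := phase1 (t := s) (ltnW hst).
apply/set0Pn; exists (nth x0 full s.+1); rewrite HDs inE index_nth //; lia.
Qed.

End Constr.


Lemma cardc (T : finType) (part : T -> nat) l :
  #|[set v | part v == l]| = count (fun v => part v == l) (enum T).
Proof.
rewrite cardsE cardE /enum_mem size_filter count_filter; apply: eq_count => x.
by rewrite /= andbT.
Qed.

Lemma lower (T : finType) (part : T -> nat) (x0 : T) (j : nat) :
  (forall x, exists y, multipartite_rel part x y) ->
  (j < #|[set v | part v == 0%N]|)%N -> (#|[set v | part v == 0%N]| < #|T|)%N ->
  (forall l, l != 0%N -> 2 * #|[set v | part v == l]| <= (#|T| - #|[set v | part v == 0%N]| + j).+1)%N ->
  (2 * j <= #|T| - #|[set v | part v == 0%N]| + j)%N ->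
  exists2 w0, is_weighting w0 & RC_run (multipartite_rel part) w0
    ((#|T| - #|[set v | part v == 0%N]| + j) +
     (2 * (#|T| - (#|T| - #|[set v | part v == 0%N]| + j))).-1)%N.
Proof.
set n := #|T|; set a0 := #|[set v | part v == 0%N]|.
move=> hnb hj ha0 hl h0.
pose Z := [seq v <- enum T | part v == 0%N].
pose O := [seq v <- enum T | part v != 0%N].
have sZ : size Z = a0 by rewrite size_filter /a0 cardc.
have sO : size O = (n - a0)%N.
  have hc : (count (fun v => part v == 0%N) (enum T) +
             count (fun v => part v != 0%N) (enum T) = size (enum T))%N :=
    count_predC (fun v => part v == 0%N) (enum T).
  by rewrite size_filter /n cardT -hc /a0 cardc addKn.
pose s := O ++ take j Z.
have ss : size s = (n - a0 + j)%N by rewrite size_cat sO size_takel // sZ ltnW.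
have allZ : forall v, v \in Z -> part v = 0%N by move=> v; rewrite mem_filter => /andP[/eqP].
have cntT : forall l, cnt part l (take j Z) = if l == 0%N then j else 0%N.
  move=> l; case: eqP => [->|/eqP l0].
    rewrite /cnt; have : all (fun v => part v == 0%N) (take j Z).
      by apply/allP => v /mem_take /allZ ->.
    by rewrite all_count => /eqP ->; rewrite size_takel // sZ ltnW.
  rewrite /cnt -(count_pred0 (take j Z)); apply: eq_in_count => v /mem_take /allZ ->.
  by rewrite eq_sym (negbTE l0).
have cntO : forall l, cnt part l O = if l == 0%N then 0%N else #|[set v | part v == l]|.
  move=> l; rewrite /cnt count_filter cardc; case: eqP => [->|/eqP l0].
    rewrite -(count_pred0 (enum T)); apply: eq_count => v /=; by case: eqP.
  by apply: eq_count => v /=; case: eqP => //= ->; rewrite l0.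
have cnts : forall l, cnt part l s = ((if l == 0%N then j else #|[set v | part v == l]|))%N.
  move=> l; have := cntO l; have := cntT l; rewrite /cnt count_cat => -> ->.
  by case: l => [|l] //=; rewrite addn0.
have [r [pr sr hr]] : exists r, [/\ perm_eq r s, sorted (drel part) r &
    (if r is x :: _ then part x != 0%N else True)].
  apply: (arrange (N := size s)) => //.
    move=> l; rewrite cnts ss; case: eqP => [_|/eqP l0]; last exact: hl.
    by move: h0; lia.
  by rewrite cnts eqxx ss.
pose pre := rev r; pose full := pre ++ drop j Z.
have spre : size pre = (n - a0 + j)%N by rewrite size_rev (perm_size pr) ss.
have hperm : perm_eq full (enum T).
  have e1 : perm_eq full (s ++ drop j Z).
    by rewrite perm_cat2r /pre (perm_rev r).
  apply: (perm_trans e1); rewrite /s -catA cat_take_drop perm_catC.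
  by rewrite (perm_filterC (fun v => part v == 0%N) (enum T)).
have sfull : size full = n by rewrite (perm_size hperm) /n cardT.
have ht0 : (0 < n - a0 + j < n)%N by apply/andP; split; lia.
have hsp : sorted (drel part) pre.
  rewrite /pre rev_sorted; move: sr; apply: sub_sorted => u v.
  by rewrite /drel eq_sym.
have halt : forall i, (i.+1 < n - a0 + j)%N ->
    part (nth x0 full i) != part (nth x0 full i.+1).
  move=> i hi; rewrite /full !nth_cat spre hi (ltnW hi).
  by apply: (sortedP x0 hsp); rewrite spre.
have htail : forall i, (n - a0 + j <= i < n)%N -> part (nth x0 full i) = 0%N.
  move=> i /andP[h1 h2]; rewrite /full nth_cat spre ltnNge h1 /=.
  apply: allZ; apply: (mem_drop (n0 := j)); apply: mem_nth.
  by rewrite size_drop sZ; lia.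
have hlast : part (nth x0 full (n - a0 + j).-1) != 0%N.
  have [x [r' [rE px]]] : exists x r', r = x :: r' /\ part x != 0%N.
    move: pr hr; case E: r => [|x r'] pr hr; last by exists x, r'.
    by move: (perm_size pr); rewrite ss /=; lia.
  have -> : (n - a0 + j).-1 = size (rev r') by rewrite -spre /pre rE rev_cons size_rcons.
  by rewrite /full nth_cat /pre rE rev_cons size_rcons ltnSn nth_rcons ltnn eqxx.
exists (w0c full); first exact: weighting hperm.
exact: constr_run hnb hperm ht0 halt htail hlast.
Qed.

Unset Implicit Arguments.

Lemma first_clean (T : finType) (e : rel T) w0 s :
  all_clean e w0 s -> exists2 t, RC_run e w0 t & (t <= s)%N.
Proof.
move=> hs; have ex : exists t, (fun t => all_clean e w0 t) t by exists s.
case: (ex_minnP ex) => t Ht Hmin; exists t; last exact: Hmin.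
split => // s' hs'; apply/negP => H; have := Hmin s' H; lia.
Qed.

Lemma count3 (T : Type) (part : T -> nat) (s : seq T) :
  (count (fun v => part v == 0%N) s + count (fun v => part v == 1%N) s
   + count (fun v => part v == 2%N) s <= size s)%N.
Proof. elim: s => //= x s IH; case: (part x) => [|[|[|m]]] /=; lia. Qed.

Theorem theorem2 (k : nat) (hk : (3 <= k)%N) (c : nat -> rat)
  (hpos : forall i, (i < k)%N -> 0 < c i)
  (hdec : forall i j, (i <= j < k)%N -> c j <= c i)
  (hsum : \sum_(i < k) c i = 1)
  (T : finType) (hn : (0 < #|T|)%N) (part : T -> nat)
  (hpart : forall v, (part v < k)%N)
  (hsize : forall i, (i < k)%N -> (#|[set v | part v == i]|)%:R = c i * (#|T|)%:R) :
  (c 1%N <= (1 - c 0%N) / 2 ->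
     exists2 m : nat, RC_is (multipartite_rel part) m &
       m%:R = (#|T|)%:R + c 0%N * (#|T|)%:R - 1) /\
  (c 1%N > (1 - c 0%N) / 2 ->
     exists2 m : nat, RC_is (multipartite_rel part) m &
       m%:R = 2 * ((#|T|)%:R - c 1%N * (#|T|)%:R)).
Proof.
have k0 : (0 < k)%N by lia.
have k1 : (1 < k)%N by lia.
have k2 : (2 < k)%N by lia.
have apos : forall i, (i < k)%N -> (0 < #|[set v | part v == i]|)%N.
  move=> i ik; rewrite -(ltr_nat rat) hsize //; apply: mulr_gt0; first exact: hpos.
  by rewrite ltr0n.
have adec : forall i j, (i <= j < k)%N ->
    (#|[set v | part v == j]| <= #|[set v | part v == i]|)%N.
  move=> i j /andP[ij jk]; rewrite -(ler_nat rat) !hsize //; last exact: leq_ltn_trans ij jk.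
  by apply: ler_wpM2r; [rewrite ler0n | apply: hdec; rewrite ij jk].
have aout : forall l, (k <= l)%N -> #|[set v | part v == l]| = 0%N.
  move=> l kl; apply/eqP; rewrite cards_eq0; apply/eqP/setP => v; rewrite !inE.
  apply/negbTE/eqP => pv; have := hpart v; rewrite pv; lia.
set n := #|T|.
set a0 := #|[set v | part v == 0%N]|.
set a1 := #|[set v | part v == 1%N]|.
have ale0 : forall l, (#|[set v | part v == l]| <= a0)%N.
  move=> l; case: (ltnP l k) => lk; first by apply: adec; rewrite leq0n lk.
  by rewrite aout.
have ale1 : forall l, l != 0%N -> (#|[set v | part v == l]| <= a1)%N.
  move=> l l0; case: (ltnP l k) => lk; first by apply: adec; rewrite lk andbT lt0n.
  by rewrite aout.
have a10 : (a1 <= a0)%N by exact: ale0.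
have [v0] := card_gt0P (apos 0%N k0); rewrite inE => /eqP pv0.
have [v1] := card_gt0P (apos 1%N k1); rewrite inE => /eqP pv1.
have hnb : forall x, exists y, multipartite_rel part x y.
  move=> x; case: (eqVneq (part x) 0%N) => h; [exists v1 | exists v0].
    by rewrite /multipartite_rel h pv1.
  by rewrite /multipartite_rel pv0.
have sum3 : (a0 + a1 + #|[set v | part v == 2%N]| <= n)%N.
  by rewrite /a0 /a1 !cardc /n cardT; exact: count3.
have a2p := apos 2%N k2.
have hN : 0 < n%:R :> rat by rewrite ltr0n.
have E0 := hsize 0%N k0; have E1 := hsize 1%N k1.
have upperW : forall w0, is_weighting w0 -> exists s p, [/\ all_clean (multipartite_rel part) w0 s,
     (0 < #|[set v | part v == p]|)%N, (s + 1 <= n + #|[set v | part v == p]|)%N &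
     forall q, q != p -> (2 * #|[set v | part v == q]| + s <= 2 * n)%N].
  move=> w0 [_ wr]; apply: upper hnb hn _ => y; have := wr y; case/andP => _ h; lra.
split => H.
- have H' : (2 * a1 + a0 <= n)%N.
    rewrite -(ler_nat rat) natrD natrM E0 E1; nra.
  exists (n + a0 - 1)%N; last first.
    rewrite natrB; last by lia.
    by rewrite natrD E0.
  split.
    move=> w0 hw; have [s [p [hs hp hsp hq]]] := upperW w0 hw.
    have [t ht tle] := @first_clean _ _ _ _ hs; exists t => //.
    have := ale0 p; lia.
  have c1 : (0 < a0)%N := apos 0%N k0.
  have c2 : (a0 < n)%N by lia.
  have c3 : forall l, l != 0%N -> (2 * #|[set v | part v == l]| <= (n - a0 + 0).+1)%N.
    by move=> l l0; have := ale1 l l0; lia.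
  have c4 : (2 * 0 <= n - a0 + 0)%N by lia.
  have [w0 hw hr] := @lower T part v0 0%N hnb c1 c2 c3 c4.
  exists w0 => //.
  have -> : (n + a0 - 1 = n - a0 + 0 + (2 * (n - (n - a0 + 0))).-1)%N by lia.
  exact: hr.
- have H' : (n < 2 * a1 + a0)%N.
    rewrite -(ltr_nat rat) natrD natrM E0 E1; nra.
  exists (2 * (n - a1))%N; last first.
    rewrite natrM natrB; last by lia.
    by rewrite E1.
  split.
    move=> w0 hw; have [s [p [hs hp hsp hq]]] := upperW w0 hw.
    have [t ht tle] := @first_clean _ _ _ _ hs; exists t => //.
    case: (eqVneq p 1%N) => [p1|p1].
      have := hq 0%N ltac:(by rewrite p1); lia.
    have := hq 1%N ltac:(by rewrite eq_sym); lia.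
  set j := (2 * a1 + a0 - n - 1)%N.
  have c1 : (j < a0)%N by lia.
  have c2 : (a0 < n)%N by lia.
  have c3 : forall l, l != 0%N -> (2 * #|[set v | part v == l]| <= (n - a0 + j).+1)%N.
    by move=> l l0; have := ale1 l l0; lia.
  have c4 : (2 * j <= n - a0 + j)%N by lia.
  have [w0 hw hr] := @lower T part v0 j hnb c1 c2 c3 c4.
  exists w0 => //.
  have -> : (2 * (n - a1) = n - a0 + j + (2 * (n - (n - a0 + j))).-1)%N by lia.
  exact: hr.
Qed.
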